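(* If $(\Sigma,*,\mathsf{emp})$ is a separation algebra, then $(\mathsf{HST},*,\mathsf{emphst})$ is a separation algebra, where $\mathsf{HST}=\mathsf{H}_\varepsilon.\Sigma$ with $\mathsf{H}_\varepsilon=(\Sigma^+.\mathsf{COM})^*.\Sigma^*$, the product $\mathit{hst}_1.s_1*\mathit{hst}_2.s_2$ is defined iff $\mathit{hst}_1=\mathit{hst}_2$ and $s_1*s_2$ is defined, in which case it equals $\mathit{hst}_1.(s_1*s_2)$, and $\mathsf{emphst}=\mathsf{H}_\varepsilon.\mathsf{emp}$.
   Context: A separation algebra $(\Sigma,*,\mathsf{emp})$ is a partial commutative monoid with a set of units $\mathsf{emp}$ such that every $s\in\Sigma$ has a unit $1$ with $s*1=s$ and $1*1'$ is undefined for distinct units $1,1'$. $\mathsf{COM}$ is an arbitrary (possibly infinite) set of commands, disjoint from $\Sigma$. Histories are finite words interleaving nonempty sequences of states with commands and ending in a state; concatenation is written with dots. *)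

(* Defs.v *)
From Stdlib Require Import List.
Import ListNotations.
Set Implicit Arguments.

(* A partial binary operation on T is represented by its graph
   [join a b c] : "a * b is defined and equals c". *)
Definition partial_fun (T : Type) (join : T -> T -> T -> Prop) : Prop :=
  forall a b c c', join a b c -> join a b c' -> c = c'.

Record sep_alg (T : Type) (join : T -> T -> T -> Prop) (emp : T -> Prop) : Prop := {
  sa_fun : partial_fun join;
  sa_comm : forall a b c, join a b c -> join b a c;
  sa_assoc : forall a b c ab abc, join a b ab -> join ab c abc ->
      exists bc, join b c bc /\ join a bc abc;
  sa_unit : forall u s t, emp u -> join s u t -> t = s;
  sa_unit_ex : forall s, exists u, emp u /\ join s u s;
  sa_unit_disj : forall u u' t, emp u -> emp u' -> u <> u' -> ~ join u u' t
}.

(* Words over the disjoint alphabet Sigma + COM (states are [inl], commands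
   [inr]). *)
Definition letter (S C : Type) := (S + C)%type.

(* H_eps = (Sigma^+ . COM)^* . Sigma^* *)
Inductive Heps (S C : Type) : list (letter S C) -> Prop :=
| Heps_states (ss : list S) : Heps (map inl ss)
| Heps_block (s : S) (ss : list S) (c : C) (h : list (letter S C)) :
    Heps h -> Heps (map inl (s :: ss) ++ inr c :: h).

Definition isHST (S C : Type) (w : list (letter S C)) : Prop :=
  exists h s, Heps h /\ w = h ++ [inl s].

Definition HST (S C : Type) := { w : list (letter S C) | isHST w }.

Definition hst_join (S C : Type) (join : S -> S -> S -> Prop)
    (w1 w2 w3 : HST S C) : Prop :=
  exists h s1 s2 s3,
    proj1_sig w1 = h ++ [inl s1] /\ proj1_sig w2 = h ++ [inl s2] /\
    proj1_sig w3 = h ++ [inl s3] /\ join s1 s2 s3.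

Definition emphst (S C : Type) (emp : S -> Prop) (w : HST S C) : Prop :=
  exists h u, Heps h /\ emp u /\ proj1_sig w = h ++ [inl u].

(* Main.v *)
Require Import Defs.
From Stdlib Require Import List ProofIrrelevance.
Import ListNotations.

Lemma snoc_inj {A : Type} {h1 h2 : list A} {a b : A} :
  h1 ++ [a] = h2 ++ [b] -> h1 = h2 /\ a = b.
Proof. intro H. apply app_inj_tail in H. exact H. Qed.

Lemma hst_eq (S C : Type) (w1 w2 : HST S C) : proj1_sig w1 = proj1_sig w2 -> w1 = w2.
Proof.
  destruct w1 as [x p], w2 as [y q]; simpl; intro E; subst.
  f_equal; apply proof_irrelevance.
Qed.

Lemma hst_heps (S C : Type) (w : HST S C) h s :
  proj1_sig w = h ++ [inl s] -> Heps h.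
Proof.
  destruct w as [x [h0 [s0 [Hh E]]]]; simpl; intro E'; subst.
  apply snoc_inj in E'. destruct E' as [-> _]. exact Hh.
Qed.

Ltac snoc H := let a := fresh in let b := fresh in
  destruct (snoc_inj H) as [a b]; clear H; subst;
  try (match goal with E : inl _ = inl _ |- _ => injection E; intro; clear E; subst end).

Theorem lemma4p7 (S COM : Type) (join : S -> S -> S -> Prop) (emp : S -> Prop) :
  sep_alg join emp -> sep_alg (hst_join (C:=COM) join) (emphst (C:=COM) emp).
Proof.
  intros [Hf Hc Ha Hu Hue Hud]. split.
  - intros a b c c' [h [s1 [s2 [s3 [E1 [E2 [E3 J]]]]]]]
      [h' [s1' [s2' [s3' [E1' [E2' [E3' J']]]]]]].
    rewrite E1 in E1'. rewrite E2 in E2'. snoc E1'. snoc E2'.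
    pose proof (Hf _ _ _ _ J J'); subst. apply hst_eq. congruence.
  - intros a b c [h [s1 [s2 [s3 [E1 [E2 [E3 J]]]]]]].
    exists h, s2, s1, s3. auto.
  - intros a b c ab abc [h [s1 [s2 [s3 [E1 [E2 [E3 J]]]]]]]
      [h' [s1' [s2' [s3' [E1' [E2' [E3' J']]]]]]].
    rewrite E3 in E1'. snoc E1'.
    destruct (Ha _ _ _ _ _ J J') as [bc [Jbc Jabc]].
    assert (Hh : Heps h') by (eapply hst_heps; exact E2).
    exists (exist _ (h' ++ [inl bc]) (ex_intro _ h' (ex_intro _ bc (conj Hh eq_refl)))
              : HST S COM).
    split.
    + exists h', s2, s2', bc. simpl. auto.
    + exists h', s1, bc, s3'. simpl. auto.
  - intros u s t [h0 [u0 [Hh [Eu E0]]]] [h [s1 [s2 [s3 [E1 [E2 [E3 J]]]]]]].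
    rewrite E0 in E2. snoc E2.
    pose proof (Hu _ _ _ Eu J); subst. apply hst_eq. congruence.
  - intros [w [h [s0 [Hh E]]]].
    destruct (Hue s0) as [u [Eu Ju]].
    exists (exist _ (h ++ [inl u]) (ex_intro _ h (ex_intro _ u (conj Hh eq_refl)))
              : HST S COM).
    split.
    + exists h, u. simpl. auto.
    + exists h, s0, u, s0. simpl. auto.
  - intros u u' t [h1 [u1 [Hh1 [Eu1 E1]]]] [h2 [u2 [Hh2 [Eu2 E2]]]] Hne
      [h [s1 [s2 [s3 [F1 [F2 [F3 J]]]]]]].
    rewrite E1 in F1. rewrite E2 in F2. snoc F1. snoc F2.
    eapply Hud; [exact Eu1 | exact Eu2 | | exact J].
    intro; subst. apply Hne. apply hst_eq. congruence.
Qed.
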